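(* Let $\mathcal{H}$ be a real Hilbert space, $N\ge2$, $\theta\in(0,1)$, $\Gamma\subseteq\mathbb{R}_{++}$ a nonempty closed interval, and for $\gamma\in\Gamma$ let $T_\gamma:\mathcal{H}^{N-1}\to\mathcal{H}^{N-1}$ be the Malitsky--Tam operator defined in the context. Suppose one of the following holds: (a) $A_1,\dots,A_{N-1}:\mathcal{H}\to\mathcal{H}$ are monotone and $L$-Lipschitz, and $A_N:\mathcal{H}\rightrightarrows\mathcal{H}$ is maximally $\mu$-strongly monotone; (b) $A_1,\dots,A_{N-1}:\mathcal{H}\to\mathcal{H}$ are maximally $\mu$-strongly monotone and $L$-Lipschitz, and $A_N:\mathcal{H}\rightrightarrows\mathcal{H}$ is maximally monotone. Then there exists $\beta\in[0,1)$ such that every $T_\gamma$, $\gamma\in\Gamma$, is a $\beta$-contraction.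
   Context: $J_A=(\mathrm{Id}+A)^{-1}$. Malitsky--Tam operator: for $\mathbf{x}=(x^1,\dots,x^{N-1})\in\mathcal{H}^{N-1}$, set $z^1=J_{\gamma A_1}x^1$, $z^i=J_{\gamma A_i}(z^{i-1}+x^i-x^{i-1})$ for $i=2,\dots,N-1$, $z^N=J_{\gamma A_N}(z^1+z^{N-1}-x^{N-1})$, and $T_\gamma\mathbf{x}=\mathbf{x}+\theta(z^2-z^1,\dots,z^N-z^{N-1})$. An operator $A$ is $\mu$-strongly monotone if $\langle x-y,u-v\rangle\ge\mu\|x-y\|^2$ for all $(x,u),(y,v)\in\operatorname{gra}A$. A $\beta$-contraction satisfies $\|T\mathbf{x}-T\mathbf{y}\|\le\beta\|\mathbf{x}-\mathbf{y}\|$ in the product norm of $\mathcal{H}^{N-1}$. *)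

(* Defs.v *)
(* A real Hilbert space is modelled as a complete
   normed module over a realType R whose norm is induced by an inner product. *)
From HB Require Import structures.
From mathcomp Require Import all_boot all_order all_algebra.
From mathcomp Require Import all_classical all_reals all_analysis.
Set Implicit Arguments. Unset Strict Implicit. Unset Printing Implicit Defensive.
Import Order.TTheory GRing.Theory Num.Theory.
Import numFieldNormedType.Exports.
Local Open Scope classical_set_scope.
Local Open Scope ring_scope.

Record inner_product (R : realType) (V : normedModType R) := InnerProduct {
  ip :> V -> V -> R;
  ip_sym : forall x y, ip x y = ip y x;
  ip_linl : forall (a : R) x y z, ip (a *: x + y) z = a * ip x z + ip y z;
  ip_normE : forall x, ip x x = `|x| ^+ 2 }.

Section Ops.
Context {R : realType} {V : completeNormedModType R} (ip : inner_product V).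

Definition graph_of (f : V -> V) : V -> set V := fun x => [set f x].

Definition monotone_op (A : V -> set V) : Prop :=
  forall x y u v, A x u -> A y v -> 0 <= ip (x - y) (u - v).

Definition strongly_monotone (mu : R) (A : V -> set V) : Prop :=
  forall x y u v, A x u -> A y v -> mu * `|x - y| ^+ 2 <= ip (x - y) (u - v).

Definition maximally_monotone (A : V -> set V) : Prop :=
  monotone_op A /\
  forall x u, (forall y v, A y v -> 0 <= ip (x - y) (u - v)) -> A x u.

Definition maximally_strongly_monotone (mu : R) (A : V -> set V) : Prop :=
  maximally_monotone A /\ strongly_monotone mu A.

Definition lipschitz_op (L : R) (f : V -> V) : Prop :=
  forall x y, `|f x - f y| <= L * `|x - y|.

(* resolvent J_{gamma A} = (Id + gamma A)^{-1}: the (for maximally monotone A,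
   unique) point z with x \in z + gamma A z; chosen by xget *)
Definition resolvent (gamma : R) (A : V -> set V) (x : V) : V :=
  xget 0 [set z | exists u, A z u /\ x = z + gamma *: u].

Definition prod_norm (n : nat) (x : 'I_n -> V) : R :=
  Num.sqrt (\sum_(i < n) `|x i| ^+ 2).

Definition beta_contraction (n : nat) (beta : R) (T : ('I_n -> V) -> ('I_n -> V)) :=
  forall x y, prod_norm (fun i => T x i - T y i) <= beta * prod_norm (fun i => x i - y i).

Definition nat_get (n : nat) (x : 'I_n -> V) (i : nat) : V :=
  match @insub nat (fun k => k < n)%N _ i with Some j => x j | None => 0 end.

Fixpoint mt_z (J : nat -> V -> V) (x : nat -> V) (i : nat) : V :=
  match i with
  | 0 => J 0%N (x 0%N)
  | k.+1 => J k.+1 (mt_z J x k + x k.+1 - x k)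
  end.

(* Malitsky--Tam operator on H^n with n = N-1, 0-based indices:
   A j (j < n) stands for A_{j+1}, B for A_N;
   z_0 = J_{gA_1} x_0, z_i = J_{gA_{i+1}} (z_{i-1} + x_i - x_{i-1}) (1 <= i <= n-1),
   z_n = J_{gB} (z_0 + z_{n-1} - x_{n-1}),
   (T x)_i = x_i + theta (z_{i+1} - z_i). *)
Definition MT_op (n : nat) (gamma theta : R) (A : 'I_n -> V -> V)
    (B : V -> set V) (x : 'I_n -> V) : 'I_n -> V :=
  let J := fun k => match @insub nat (fun k => k < n)%N _ k with
                    | Some j => resolvent gamma (graph_of (A j))
                    | None => id end in
  let xn := nat_get x in
  let z := fun i => if (i < n)%N then mt_z J xn i
                    else resolvent gamma B (mt_z J xn 0 + mt_z J xn n.-1 - xn n.-1) in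
  fun i => x i + theta *: (z (nat_of_ord i).+1 - z (nat_of_ord i)).

End Ops.

(* Main.v *)
Require Import Defs.
From HB Require Import structures.
From mathcomp Require Import all_boot all_order all_algebra.
From mathcomp Require Import all_classical all_reals all_analysis.
From mathcomp Require Import ring lra.
Import Order.TTheory GRing.Theory Num.Theory.
Import numFieldNormedType.Exports.
Local Open Scope classical_set_scope.
Local Open Scope ring_scope.


Set Implicit Arguments. Unset Strict Implicit. Unset Printing Implicit Defensive.

Section IP.
Context {R : realType} {V : completeNormedModType R} (ip : inner_product V).

Lemma ip0l z : ip 0 z = 0.
Proof. have h := ip_linl ip 1 0 0 z; rewrite scale1r addr0 mul1r in h; lra. Qed.
Lemma ipDl x y z : ip (x + y) z = ip x z + ip y z.
Proof. by have := ip_linl ip 1 x y z; rewrite scale1r mul1r. Qed.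
Lemma ipZl a x z : ip (a *: x) z = a * ip x z.
Proof. by have := ip_linl ip a x 0 z; rewrite addr0 ip0l addr0. Qed.
Lemma ipNl x z : ip (- x) z = - ip x z.
Proof. by rewrite -scaleN1r ipZl mulN1r. Qed.
Lemma ipBl x y z : ip (x - y) z = ip x z - ip y z.
Proof. by rewrite ipDl ipNl. Qed.
Lemma ip0r z : ip z 0 = 0.
Proof. by rewrite ip_sym ip0l. Qed.
Lemma ipDr x y z : ip z (x + y) = ip z x + ip z y.
Proof. by rewrite ip_sym ipDl !(ip_sym _ z). Qed.
Lemma ipZr a x z : ip z (a *: x) = a * ip z x.
Proof. by rewrite ip_sym ipZl ip_sym. Qed.
Lemma ipNr x z : ip z (- x) = - ip z x.
Proof. by rewrite ip_sym ipNl ip_sym. Qed.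
Lemma ipBr x y z : ip z (x - y) = ip z x - ip z y.
Proof. by rewrite ipDr ipNr. Qed.
Lemma ipxx x : ip x x = `|x| ^+ 2.
Proof. exact: ip_normE. Qed.

Lemma ip_CS2 x y : ip x y ^+ 2 <= `|x| ^+ 2 * `|y| ^+ 2.
Proof.
have hn : 0 <= ip (`|y| ^+ 2 *: x - ip x y *: y) (`|y| ^+ 2 *: x - ip x y *: y).
  by rewrite ip_normE sqr_ge0.
rewrite ipBl !ipBr !ipZl !ipZr !ip_normE (ip_sym _ y x) in hn.
have e : `|y| ^+ 2 * (`|y| ^+ 2 * `|x| ^+ 2) - `|y| ^+ 2 * (ip x y * ip x y) -
   (ip x y * (`|y| ^+ 2 * ip x y) - ip x y * (ip x y * `|y| ^+ 2)) =
   `|y| ^+ 2 * (`|x| ^+ 2 * `|y| ^+ 2 - ip x y ^+ 2) by ring.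
rewrite e in hn.
have [y0|ypos] := eqVneq (`|y|) 0.
  move/eqP: y0; rewrite normr_eq0 => /eqP ->; rewrite ip0r normr0; lra.
have yp : 0 < `|y| ^+ 2 by rewrite exprn_gt0 // lt_def ypos normr_ge0.
by rewrite -subr_ge0; rewrite pmulr_rge0 in hn.
Qed.

Lemma ip_CS x y : `|ip x y| <= `|x| * `|y|.
Proof.
rewrite -(ler_pXn2r (n:=2)) // ?nnegrE ?mulr_ge0 //.
by rewrite real_normK ?num_real // exprMn ip_CS2.
Qed.
End IP.

Set Implicit Arguments. Unset Strict Implicit. Unset Printing Implicit Defensive.

Section Lim.
Context {R : realType} {V : completeNormedModType R} (ip : inner_product V).

Lemma ipcvg (f g : nat -> V) a b : f @ \oo --> a -> g @ \oo --> b ->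
  forall e, 0 < e -> \forall k \near \oo, `|ip a b - ip (f k) (g k)| < e.
Proof.
move=> /cvgrPdist_lt fa /cvgrPdist_lt gb e e0.
have e1 : 0 < e / (2 * (`|b| + 1)) by rewrite divr_gt0 // mulr_gt0 // ltr_wpDl.
have e2 : 0 < Num.min 1 (e / (2 * (`|a| + 1))).
  by rewrite lt_min ltr01 /= divr_gt0 // mulr_gt0 // ltr_wpDl.
move: (fa _ e1) (gb _ e2); apply: filterS2 => k h1 h2.
have eq1 : ip a b - ip (f k) (g k) = ip (a - f k) (g k) + ip a (b - g k).
  rewrite ipBl ipBr; ring.
rewrite eq1.
have c1 := ip_CS ip (a - f k) (g k).
have c2 := ip_CS ip a (b - g k).
have hg : `|g k| <= `|b| + 1.
  have : `|g k| <= `|b| + `|b - g k|.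
    by rewrite -{1}(subKr b (g k)) (le_trans (ler_normD _ _)) // normrN.
  have : `|b - g k| < 1 by move: h2; rewrite lt_min => /andP[].
  move=> ? ?; lra.
have h2' : `|b - g k| < e / (2 * (`|a| + 1)) by move: h2; rewrite lt_min => /andP[].
have na := normr_ge0 a; have nb := normr_ge0 b; have ng := normr_ge0 (g k).
have nfk := normr_ge0 (a - f k); have ngk := normr_ge0 (b - g k).
have nb1 : `|b| + 1 != 0 by rewrite gt_eqF // ltr_wpDl.
have na1 : `|a| + 1 != 0 by rewrite gt_eqF // ltr_wpDl.
have t1 : `|a - f k| * `|g k| <= e / 2.
  have : `|a - f k| * `|g k| <= e / (2 * (`|b| + 1)) * (`|b| + 1).
    by apply: ler_pM => //; apply: ltW.
  have -> : e / (2 * (`|b| + 1)) * (`|b| + 1) = e / 2 by field.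
  done.
have t2 : `|a| * `|b - g k| < e / 2.
  have : `|a| * `|b - g k| <= (`|a| + 1) * `|b - g k| by rewrite ler_wpM2r // lerDl.
  have : (`|a| + 1) * `|b - g k| < (`|a| + 1) * (e / (2 * (`|a| + 1))).
    by rewrite ltr_pM2l // ltr_wpDl.
  have -> : (`|a| + 1) * (e / (2 * (`|a| + 1))) = e / 2 by field.
  by move=> ? ?; lra.
have := ler_normD (ip (a - f k) (g k)) (ip a (b - g k)).
lra.
Qed.
End Lim.

Section Minty.
Context {R : realType} {V : completeNormedModType R} (ip : inner_product V).
Variable A : V -> set V.
Hypothesis hA : maximally_monotone ip A.

Definition ell y v x u := ip x v + ip y u - ip y v.
Definition Sg x u c := forall y v, A y v -> ell y v x u + (`|x| ^+ 2 + `|u| ^+ 2) / 2 <= c.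

Lemma Sg_lb x u c : Sg x u c -> ip x u + (`|x| ^+ 2 + `|u| ^+ 2) / 2 <= c.
Proof.
move=> hS; rewrite leNgt; apply/negP => hlt.
have Axu : A x u.
  apply: (proj2 hA) => y v Ayv; have := hS y v Ayv; rewrite /ell ipBl !ipBr; lra.
have := hS x u Axu; rewrite /ell; lra.
Qed.

Lemma sum_sq x u : ip x u + (`|x| ^+ 2 + `|u| ^+ 2) / 2 = `|x + u| ^+ 2 / 2.
Proof. rewrite -!(ip_normE ip) ipDl !ipDr (ip_sym _ u x); by field. Qed.

Lemma Sg_ge0 x u c : Sg x u c -> 0 <= c.
Proof.
move/Sg_lb; rewrite sum_sq => h; apply: le_trans h.
by rewrite divr_ge0 // sqr_ge0.
Qed.

Lemma graph_ne : exists y v, A y v.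
Proof.
case: (pselect (exists y v, A y v)) => // hn; exists 0, 0.
apply: (proj2 hA) => y v Ayv; exfalso; apply: hn; by exists y, v.
Qed.

Lemma Sg_graph y v : A y v -> Sg y v (ip y v + (`|y| ^+ 2 + `|v| ^+ 2) / 2).
Proof.
move=> Ayv y' v' A'; have := proj1 hA y y' v v' Ayv A'; rewrite ipBl !ipBr /ell; lra.
Qed.

Lemma Sg_conv x u c x' u' c' t : 0 <= t <= 1 -> Sg x u c -> Sg x' u' c' ->
  Sg ((1 - t) *: x + t *: x') ((1 - t) *: u + t *: u')
     ((1 - t) * c + t * c' - t * (1 - t) / 2 * (`|x - x'| ^+ 2 + `|u - u'| ^+ 2)).
Proof.
move=> /andP[t0 t1] h1 h2 y v Ayv.
have e : ell y v ((1 - t) *: x + t *: x') ((1 - t) *: u + t *: u') +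
   (`|(1 - t) *: x + t *: x'| ^+ 2 + `|(1 - t) *: u + t *: u'| ^+ 2) / 2 =
   (1 - t) * (ell y v x u + (`|x| ^+ 2 + `|u| ^+ 2) / 2) +
   t * (ell y v x' u' + (`|x'| ^+ 2 + `|u'| ^+ 2) / 2) -
   t * (1 - t) / 2 * (`|x - x'| ^+ 2 + `|u - u'| ^+ 2).
  rewrite /ell -!(ip_normE ip) !(ipDl, ipBl, ipZl, ipDr, ipBr, ipZr).
  rewrite ?(ipNl, ipNr) (ip_sym _ x' x) (ip_sym _ u' u); ring.
rewrite e; have := h1 y v Ayv; have := h2 y v Ayv.
set a1 := ell y v x u + _; set a2 := ell y v x' u' + _.
move=> ha2 ha1.
have : (1 - t) * a1 <= (1 - t) * c by rewrite ler_wpM2l // subr_ge0.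
have : t * a2 <= t * c' by rewrite ler_wpM2l.
lra.
Qed.


Lemma near_and (P Q : set nat) : (\forall k \near \oo, P k) -> (\forall k \near \oo, Q k) ->
  \forall k \near \oo, P k /\ Q k.
Proof. by move=> h1 h2; move: h1 h2; apply: filterS2 => k. Qed.

Definition iS (k : nat) : R := k.+1%:R^-1.
Lemma iS_gt0 k : 0 < iS k. Proof. by rewrite /iS invr_gt0 ltr0Sn. Qed.
Lemma invS_le (k l : nat) : (k <= l)%N -> iS l <= iS k.
Proof. by move=> h; rewrite /iS lef_pV2 ?posrE ?ltr0Sn // ler_nat ltnS. Qed.

Lemma cauchy_of (s : nat -> V) :
  (forall k l, `|s k - s l| ^+ 2 <= 4 * (iS k + iS l)) -> cvg (s @ \oo).
Proof.
move=> hs; apply: cauchy_cvg; apply: cauchy_exP => e e0.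
have e' : 0 < e ^+ 2 / 8 by rewrite divr_gt0 // exprn_gt0.
have [N hN] := filter_ex (near_infty_natSinv_lt (PosNum e')).
exists (s N); exists N => // k /= hk.
rewrite -ball_normE /ball_ /=.
have := hs N k; have := invS_le hk; move: hN => /= hN h1 h2.
have hd : `|s N - s k| ^+ 2 < e ^+ 2.
  have hN' : iS N < e ^+ 2 / 8 := hN.
  lra.
have n0 := normr_ge0 (s N - s k).
rewrite ltNge; apply/negP => hc.
have : e ^+ 2 <= `|s N - s k| ^+ 2 by rewrite lerXn2r // ?nnegrE ?ltW.
lra.
Qed.

Lemma minty0 : exists x, A x (- x).
Proof.
set E := [set c | exists x u, Sg x u c].
have E_ne : E !=set0.
  have [y [v Ayv]] := graph_ne; eexists; exists y, v; exact: Sg_graph.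
have E_lb : has_lbound E by exists 0 => c [x [u h]]; exact: Sg_ge0 h.
have hinf : has_inf E by split.
set m := inf E.
have mle : forall x u c, Sg x u c -> m <= c.
  by move=> x u c h; apply: (ge_inf E_lb); exists x, u.
have H : forall k : nat, exists p : (V * V) * R, Sg p.1.1 p.1.2 p.2 /\ p.2 < m + iS k.
  move=> k; have [c [x [u h]] hc] := inf_adherent (iS_gt0 k) hinf.
  by exists (x, u, c).
have [f hf] := choice H.
set xs := fun k => (f k).1.1; set us := fun k => (f k).1.2; set cs := fun k => (f k).2.
have hS : forall k, Sg (xs k) (us k) (cs k) by move=> k; exact: (hf k).1.
have hc : forall k, cs k < m + iS k by move=> k; exact: (hf k).2.
have key : forall k l, `|xs k - xs l| ^+ 2 + `|us k - us l| ^+ 2 <= 4 * (iS k + iS l).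
  move=> k l; have t01 : 0 <= (1 / 2 : R) <= 1 by apply/andP; split; lra.
  have := mle _ _ _ (Sg_conv t01 (hS k) (hS l)).
  have := hc k; have := hc l; lra.
have cx : cvg (xs @ \oo).
  apply: cauchy_of => k l; have := key k l; have := sqr_ge0 (`|us k - us l|); lra.
have cu : cvg (us @ \oo).
  apply: cauchy_of => k l; have := key k l; have := sqr_ge0 (`|xs k - xs l|); lra.
set xb := lim (xs @ \oo); set ub := lim (us @ \oo).
have Sm : Sg xb ub m.
  move=> y v Ayv; rewrite leNgt; apply/negP => hlt.
  set rb := _ + _ in hlt.
  set d := rb - m.
  have d0 : 0 < d / 8 by rewrite divr_gt0 // subr_gt0.
  have n1 := ipcvg ip cx (@cvg_cst _ v nat \oo _) d0.
  have n2 := ipcvg ip cu (@cvg_cst _ y nat \oo _) d0.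
  have {}n1 := n1 ltac:(typeclasses eauto).
  have {}n2 := n2 ltac:(typeclasses eauto).
  have n3 := ipcvg ip cx cx d0.
  have n4 := ipcvg ip cu cu d0.
  have d0' : 0 < d / 2 by rewrite divr_gt0 // subr_gt0.
  have n5 := near_infty_natSinv_lt (PosNum d0').
  have [k [[[[h1 h2] h3] h4] h5']] := filter_ex (near_and (near_and (near_and (near_and n1 n2) n3) n4) n5).
  have h5 : iS k < d / 2 := h5'.
  have := hS k y v Ayv; have := hc k.
  move: h1 h2 h3 h4 h5 hlt; rewrite /d /rb /xb /ub /ell -!(ip_normE ip) /= (ip_sym _ y ub) (ip_sym _ y (us k)).
  move=> h1 h2 h3 h4 h5 hlt.
  have := ler_norm (ip xb v - ip (xs k) v); have := ler_norm (ip ub y - ip (us k) y).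
  have := ler_norm (ip xb xb - ip (xs k) (xs k)); have := ler_norm (ip ub ub - ip (us k) (us k)).
  lra.
have lb := Sg_lb Sm.
have var : forall y v, A y v ->
    (`|xb - y| ^+ 2 + `|ub - v| ^+ 2) / 2 <= ip y v + (`|y| ^+ 2 + `|v| ^+ 2) / 2 - m.
  move=> y v Ayv; have Sc := Sg_graph Ayv.
  move: Sc; set c := ip y v + _ => Sc.
  have cm : m <= c := mle _ _ _ Sc.
  set D := `|xb - y| ^+ 2 + `|ub - v| ^+ 2.
  rewrite leNgt; apply/negP => hlt.
  have Dpos : 0 < D by lra.
  set dl := D / 2 - (c - m).
  have dl0 : 0 < dl by rewrite /dl; lra.
  set t := dl / D.
  have t0 : 0 < t by rewrite /t divr_gt0.
  have t1 : t <= 1 by rewrite /t ler_pdivrMr // mul1r /dl; lra.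
  have t01 : 0 <= t <= 1 by rewrite t1 ltW.
  have h := mle _ _ _ (Sg_conv t01 Sm Sc); rewrite -/D in h.
  have e : (1 - t) * m + t * c - t * (1 - t) / 2 * D - m = - (t * dl) / 2.
    by rewrite /t /dl; field; rewrite gt_eqF.
  have : 0 < t * dl by rewrite mulr_gt0.
  lra.
have s1 := ip_sym ip xb ub.
have hn : 0 <= ip (xb + ub) (xb + ub) by rewrite ip_normE sqr_ge0.
rewrite !(ipDl, ipDr) in hn.
move: lb; rewrite -!(ip_normE ip) => lb.
have gph : A (- ub) (- xb).
  apply: (proj2 hA) => y v Ayv.
  have := var y v Ayv.
  rewrite -!(ip_normE ip) !(ipDl, ipBl, ipNl, ipDr, ipBr, ipNr).
  have := ip_sym ip y xb; have := ip_sym ip v ub; have := ip_sym ip y v;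
  have := ip_sym ip v xb; have := ip_sym ip y ub.
  lra.
have := var _ _ gph.
rewrite -!(ip_normE ip) !(ipDl, ipBl, ipNl, ipDr, ipBr, ipNr) => hv.
have h0 : ip (xb + ub) (xb + ub) <= 0.
  rewrite !(ipDl, ipDr). lra.
have : xb + ub = 0.
  by apply/eqP; rewrite -normr_eq0 -sqrf_eq0 -(ip_normE ip) eq_le h0 /= ip_normE sqr_ge0.
move=> h; exists xb.
have e1 : ub = - xb by apply/eqP; rewrite -subr_eq0 opprK addrC h.
by move: gph; rewrite e1 !opprK.
Qed.

End Minty.

Section Minty2.
Context {R : realType} {V : completeNormedModType R} (ip : inner_product V).

Lemma minty (A : V -> set V) : maximally_monotone ip A -> forall g : R, 0 < g ->
  forall w, exists z u, A z u /\ w = z + g *: u.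
Proof.
move=> hA g g0 w.
set A' := fun x u' => A (x + w) (g^-1 *: u').
have gi0 : 0 < g^-1 by rewrite invr_gt0.
have hA' : maximally_monotone ip A'.
  split.
    move=> x y u v hx hy; have := proj1 hA _ _ _ _ hx hy.
    have -> : x + w - (y + w) = x - y by rewrite opprD addrACA subrr addr0.
    by rewrite -scalerBr ipZr pmulr_rge0.
  move=> x u hxu; rewrite /A'; apply: (proj2 hA) => y0 v0 Ay0.
  have h := hxu (y0 - w) (g *: v0).
  have hy : A' (y0 - w) (g *: v0) by rewrite /A' subrK scalerA mulVf ?gt_eqF // scale1r.
  have := h hy.
  have -> : x - (y0 - w) = x + w - y0 by rewrite opprB addrA.
  have -> : u - g *: v0 = g *: (g^-1 *: u - v0) by rewrite scalerBr scalerA divff ?gt_eqF // scale1r.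
  by rewrite ipZr pmulr_rge0.
have [x hx] := minty0 hA'.
exists (x + w), (g^-1 *: - x); split => //.
by rewrite scalerA divff ?gt_eqF // scale1r addrC addKr.
Qed.

Lemma resolventP (A : V -> set V) (g : R) w : maximally_monotone ip A -> 0 < g ->
  exists u, A (resolvent g A w) u /\ w = resolvent g A w + g *: u.
Proof.
move=> hA g0; rewrite /resolvent.
have := @xgetPex _ 0 [set z | exists u, A z u /\ w = z + g *: u].
apply; have [z [u h]] := minty hA g0 w; by exists z, u.
Qed.

Lemma lip_max (A : V -> V) (L : R) : monotone_op ip (graph_of A) -> lipschitz_op L A ->
  maximally_monotone ip (graph_of A).
Proof.
move=> hm hl; split => // x u h; rewrite /graph_of /=.
set d := A x - u.
set t := (2 * (`|L| + 1))^-1.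
have t0 : 0 < t by rewrite invr_gt0 mulr_gt0 // ltr_wpDl.
have ex : x - (x - t *: d) = t *: d by rewrite opprB addrC subrK.
have := h (x - t *: d) (A (x - t *: d)) erefl.
rewrite ex ipZl pmulr_rge0 // => h1.
have hl1 := hl x (x - t *: d).
rewrite ex normrZ gtr0_norm // in hl1.
have e : u - A (x - t *: d) = (A x - A (x - t *: d)) - d by rewrite /d opprB [RHS]addrC addrA subrK.
rewrite e ipBr ip_normE in h1.
set q := `|A x - A (x - t *: d)| in hl1.
have c1 : ip d (A x - A (x - t *: d)) <= `|d| * q.
  exact: le_trans (ler_norm _) (ip_CS ip _ _).
have nd := normr_ge0 d.
have c2 : `|d| * q <= `|d| * (L * (t * `|d|)) by rewrite ler_wpM2l.
have hLt : `|L| * t <= 1 / 2.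
  have hL0 : `|L| + 1 != 0 by rewrite gt_eqF // ltr_wpDl.
  have -> : `|L| * t = 1 / 2 - t by rewrite /t; field.
  lra.
have c3 : L * (t * `|d|) <= `|L| * t * `|d|.
  rewrite mulrA; apply: ler_wpM2r => //; apply: ler_wpM2r; [exact: ltW | exact: ler_norm].
have c4 : `|d| * (L * (t * `|d|)) <= `|d| * (1 / 2 * `|d|).
  apply: ler_wpM2l => //; apply: le_trans c3 _; rewrite ler_wpM2r //.
have : `|d| ^+ 2 <= 0 by rewrite expr2; lra.
move=> h0; have : `|d| = 0 by apply/eqP; rewrite -sqrf_eq0 eq_le h0 sqr_ge0.
by move/eqP; rewrite normr_eq0 subr_eq0 => /eqP ->.
Qed.
End Minty2.

Set Implicit Arguments. Unset Strict Implicit. Unset Printing Implicit Defensive.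

Section Alg.
Context {R : realType} {V : completeNormedModType R} (ip : inner_product V).
Variables (X Z : nat -> V).

Definition Wd k := Z k.+1 - Z k.

Definition Ppart m := ip (Z 0) (X 0 - Z 0) +
  \sum_(k < m) ip (Z k.+1) (Z k + X k.+1 - X k - Z k.+1).

Lemma Ppart_eq m : Ppart m =
  - \sum_(k < m) (ip (X k) (Wd k) + `|Wd k| ^+ 2 / 2) + ip (Z m) (X m)
  - `|Z 0| ^+ 2 / 2 - `|Z m| ^+ 2 / 2.
Proof.
elim: m => [|m IH].
  rewrite /Ppart !big_ord0 addr0 oppr0 add0r -(ip_normE ip) ipBr; lra.
move: IH; rewrite /Ppart !big_ord_recr /= => IH.
have -> : forall a b c : R, a + (b + c) = (a + b) + c by move=> *; ring.
rewrite IH /Wd -!(ip_normE ip) !(ipDl, ipBl, ipNl, ipDr, ipBr, ipNr).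
have := ip_sym ip (Z m) (Z m.+1); have := ip_sym ip (X m) (Z m.+1);
have := ip_sym ip (X m.+1) (Z m.+1); have := ip_sym ip (Z m) (X m).
lra.
Qed.

Definition Sfull m := Ppart m + ip (Z m.+1) (Z 0 + Z m - X m - Z m.+1).

Lemma Sfull_eq m : Sfull m =
  - \sum_(k < m.+1) ip (X k) (Wd k) - \sum_(k < m.+1) `|Wd k| ^+ 2 / 2
  - `|Z 0 - Z m.+1| ^+ 2 / 2.
Proof.
rewrite /Sfull Ppart_eq big_split /= !big_ord_recr /=.
rewrite /Wd -!(ip_normE ip) !(ipDl, ipBl, ipNl, ipDr, ipBr, ipNr).
have := ip_sym ip (Z m) (Z m.+1); have := ip_sym ip (X m) (Z m.+1);
have := ip_sym ip (Z 0) (Z m.+1); have := ip_sym ip (Z m) (X m).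
set s1 := \sum_(i < m) _; set s2 := \sum_(i < m) _.
lra.
Qed.

Lemma sum_step_eq m (th : R) : \sum_(k < m) `|X k + th *: Wd k| ^+ 2 =
  \sum_(k < m) `|X k| ^+ 2 + 2 * th * \sum_(k < m) ip (X k) (Wd k)
  + th ^+ 2 * \sum_(k < m) `|Wd k| ^+ 2.
Proof.
rewrite !mulr_sumr -!big_split /=; apply: eq_bigr => k _.
move: (Wd k) (X k) => w x.
rewrite -!(ip_normE ip) !(ipDl, ipDr, ipZl, ipZr) (ip_sym _ w x); ring.
Qed.

Lemma mt_identity m (th : R) :
  \sum_(k < m.+1) `|X k + th *: Wd k| ^+ 2 =
  \sum_(k < m.+1) `|X k| ^+ 2 - 2 * th * Sfull m
  - th * (1 - th) * \sum_(k < m.+1) `|Wd k| ^+ 2 - th * `|Z 0 - Z m.+1| ^+ 2.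
Proof.
rewrite sum_step_eq Sfull_eq -mulr_suml.
set a := \sum_(k < m.+1) `|X k| ^+ 2.
set b := \sum_(k < m.+1) ip (X k) (Wd k).
set c := \sum_(k < m.+1) `|Wd k| ^+ 2.
by field.
Qed.
End Alg.

Set Implicit Arguments. Unset Strict Implicit. Unset Printing Implicit Defensive.

Lemma vid (V : zmodType) (a b c d : V) : a + (b - c) + (c + d - a - b) = d.
Proof. rewrite addrC -!addrA [- b + _]addrCA addKr addKr addrCA subrr addr0 //. Qed.
Lemma vid2 (V : zmodType) (a b : V) : b = a + (b - a).
Proof. by rewrite addrC subrK. Qed.

Section Core.
Context {R : realType} {V : completeNormedModType R} (ip : inner_product V).

Lemma le_sum_term (f : nat -> R) n k : (forall i, 0 <= f i) -> (k < n)%N ->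
  f k <= \sum_(i < n) f i.
Proof.
move=> h hk; rewrite (bigD1 (Ordinal hk)) //= lerDl sumr_ge0 //.
Qed.

Lemma norm_le_sqrt (v : V) (Q : R) : `|v| ^+ 2 <= Q -> `|v| <= Num.sqrt Q.
Proof.
move=> h; have Q0 : 0 <= Q := le_trans (sqr_ge0 _) h.
by rewrite -(ler_pXn2r (n:=2)) ?nnegrE ?sqrtr_ge0 // sqr_sqrtr.
Qed.

Lemma Xbound (X Z : nat -> V) m (lam rho : R) : 0 <= lam -> 0 <= rho ->
  (forall k, (k < m.+1)%N -> `|Z k| <= rho) ->
  (forall k, (k < m)%N -> `|Z k.+1 - Z k| <= rho) ->
  `|X 0 - Z 0| <= lam * `|Z 0| ->
  (forall k, (k < m)%N -> `|Z k + X k.+1 - X k - Z k.+1| <= lam * `|Z k.+1|) ->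
  forall k, (k < m.+1)%N -> `|X k| <= k.+1%:R * ((2 + lam) * rho).
Proof.
move=> l0 r0 hZ hW hL0 hLk; elim=> [|k IH] hk.
  rewrite mul1r (vid2 (Z 0) (X 0)); apply: le_trans (ler_normD _ _) _.
  have := hZ 0 hk; have : lam * `|Z 0| <= lam * rho by rewrite ler_wpM2l // hZ.
  lra.
have hk' : (k < m)%N by [].
rewrite -(vid (X k) (Z k.+1) (Z k) (X k.+1)).
apply: le_trans (ler_normD _ _) _.
have := ler_normD (X k) (Z k.+1 - Z k).
have := IH (ltnW hk); have := hW k hk'; have := hLk k hk'.
have : lam * `|Z k.+1| <= lam * rho by rewrite ler_wpM2l // hZ.
rewrite -natr1 mulrDl mul1r.
move: (k.+1%:R * ((2 + lam) * rho)) => t.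
lra.
Qed.

Lemma sumX_bound (X Z : nat -> V) m (lam rho : R) : 0 <= lam -> 0 <= rho ->
  (forall k, (k < m.+1)%N -> `|Z k| <= rho) ->
  (forall k, (k < m)%N -> `|Z k.+1 - Z k| <= rho) ->
  `|X 0 - Z 0| <= lam * `|Z 0| ->
  (forall k, (k < m)%N -> `|Z k + X k.+1 - X k - Z k.+1| <= lam * `|Z k.+1|) ->
  \sum_(k < m.+1) `|X k| ^+ 2 <= m.+1%:R ^+ 3 * (2 + lam) ^+ 2 * rho ^+ 2.
Proof.
move=> l0 r0 hZ hW hL0 hLk.
have hX := Xbound l0 r0 hZ hW hL0 hLk.
have C0 : 0 <= (2 + lam) * rho by rewrite mulr_ge0 // addr_ge0.
apply: le_trans (_ : \sum_(k < m.+1) (m.+1%:R * ((2 + lam) * rho)) ^+ 2 <= _).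
  apply: ler_sum => k _; rewrite lerXn2r ?nnegrE ?mulr_ge0 //.
  1: by rewrite addr_ge0.
  apply: le_trans (hX k (ltn_ord k)) _; apply: ler_wpM2r => //.
  by rewrite ler_nat.
rewrite sumr_const card_ord -[X in X <= _]mulr_natl; rewrite le_eqVlt; apply/orP; left; apply/eqP; ring.
Qed.

Definition Kc (n : nat) (lam : R) : R := n%:R ^+ 3 * (2 + lam) ^+ 2 * (n.+1)%:R ^+ 2.
Definition cc (th a mu : R) : R := Num.min (2 * th * a * mu) (th * (1 - th)).
Definition kap n lam th a mu : R := Num.min 1 (cc th a mu / Kc n lam).

Lemma finish (SX SP Q K c k : R) : 0 <= Q -> 0 < K -> 0 < c -> k = Num.min 1 (c / K) ->
  SX <= K * Q -> c * Q <= SX - SP -> SP <= (1 - k) * SX.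
Proof.
move=> Q0 K0 c0 -> h1 h2.
have k0 : 0 <= Num.min 1 (c / K) by rewrite le_min ler01 divr_ge0 // ltW.
have kK : Num.min 1 (c / K) * K <= c.
  by rewrite -ler_pdivlMr // ge_min lexx orbT.
move: k0 kK; move: (Num.min 1 (c / K)) => k1 k0 kK.
have : k1 * K * Q <= c * Q by rewrite ler_wpM2r.
have : k1 * SX <= k1 * (K * Q) by rewrite ler_wpM2l.
rewrite mulrA; lra.
Qed.

Lemma Kc_gt0 n lam : 0 <= lam -> 0 < Kc n.+1 lam.
Proof.
move=> l0; rewrite /Kc.
have h2 : 0 < 2 + lam by rewrite ltr_wpDr.
by rewrite !mulr_gt0 // exprn_gt0 // ltr0Sn.
Qed.

Lemma cc_gt0 th a mu : 0 < th < 1 -> 0 < a -> 0 < mu -> 0 < cc th a mu.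
Proof.
move=> /andP[t0 t1] a0 m0; rewrite /cc lt_min !mulr_gt0 //= subr_gt0 //.
Qed.

End Core.


Set Implicit Arguments. Unset Strict Implicit. Unset Printing Implicit Defensive.

Section Core2.
Context {R : realType} {V : completeNormedModType R} (ip : inner_product V).

Lemma core (X Z : nat -> V) m (th a g mu lam muA muB : R) :
 0 < th < 1 -> 0 < a -> a <= g -> 0 < mu -> 0 <= lam ->
 (muA = 0 /\ muB = mu) \/ (muA = mu /\ muB = 0) ->
 g * muA * `|Z 0| ^+ 2 <= ip (Z 0) (X 0 - Z 0) ->
 (forall k, (k < m)%N -> g * muA * `|Z k.+1| ^+ 2 <= ip (Z k.+1) (Z k + X k.+1 - X k - Z k.+1)) ->
 g * muB * `|Z m.+1| ^+ 2 <= ip (Z m.+1) (Z 0 + Z m - X m - Z m.+1) ->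
 `|X 0 - Z 0| <= lam * `|Z 0| ->
 (forall k, (k < m)%N -> `|Z k + X k.+1 - X k - Z k.+1| <= lam * `|Z k.+1|) ->
 \sum_(k < m.+1) `|X k + th *: (Z k.+1 - Z k)| ^+ 2 <=
   (1 - kap m.+1 lam th a mu) * \sum_(k < m.+1) `|X k| ^+ 2.
Proof.
move=> th01 a0 ag mu0 l0 hcase hD0 hDk hDB hL0 hLk.
have idt := mt_identity ip X Z m th.
rewrite /Wd in idt.
set SX := \sum_(k < m.+1) `|X k| ^+ 2 in idt *.
set LHS := \sum_(k < m.+1) _ in idt *.
set SW := \sum_(k < m.+1) `|Z k.+1 - Z k| ^+ 2 in idt.
set E0 := `|Z 0 - Z m.+1| ^+ 2 in idt.
set S := Sfull ip X Z m in idt.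
have g0 : 0 < g := lt_le_trans a0 ag.
have [t0 t1] : 0 < th /\ th < 1 by case/andP: th01.
have mA0 : 0 <= muA by case: hcase => -[-> _] //; exact: ltW.
have mB0 : 0 <= muB by case: hcase => -[_ ->] //; exact: ltW.
set SZ' := \sum_(k < m) `|Z k.+1| ^+ 2.
have hS : g * muA * (`|Z 0| ^+ 2 + SZ') + g * muB * `|Z m.+1| ^+ 2 <= S.
  rewrite /S /Sfull /Ppart mulrDr /SZ' mulr_sumr.
  have : \sum_(i < m) g * muA * `|Z i.+1| ^+ 2 <=
         \sum_(k < m) ip (Z k.+1) (Z k + X k.+1 - X k - Z k.+1).
    by apply: ler_sum => i _; exact: hDk.
  lra.
have SW0 : 0 <= SW by apply: sumr_ge0 => *; exact: sqr_ge0.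
have E00 : 0 <= E0 by exact: sqr_ge0.
have SZ'0 : 0 <= SZ' by apply: sumr_ge0 => *; exact: sqr_ge0.
set c := cc th a mu.
have c0 : 0 < c by exact: cc_gt0.
have hc1 : c <= 2 * th * g * mu.
  apply: le_trans (_ : c <= 2 * th * a * mu) _; first by rewrite /c /cc ge_min lexx.
  apply: ler_wpM2r; first exact: ltW.
  by apply: ler_wpM2l => //; rewrite mulr_ge0 // ltW.
have hc2 : c <= th * (1 - th) by rewrite /c /cc ge_min lexx orbT.
have hc3 : th * (1 - th) <= th.
  have : th * th >= 0 by rewrite mulr_ge0 // ltW.
  rewrite mulrBr mulr1; lra.
have hW : forall Q, SW <= Q -> forall k, (k < m)%N -> `|Z k.+1 - Z k| <= Num.sqrt Q.
  move=> Q hQ k hk; apply: norm_le_sqrt; apply: le_trans hQ.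
  rewrite /SW; apply: (@le_sum_term R (fun i => `|Z i.+1 - Z i| ^+ 2) m.+1 k).
    by move=> ?; exact: sqr_ge0.
  exact: ltnW.
have fin : forall Q, 0 <= Q -> c * Q <= SX - LHS ->
    (forall k, (k < m.+1)%N -> `|Z k| <= m.+2%:R * Num.sqrt Q) ->
    (forall k, (k < m)%N -> `|Z k.+1 - Z k| <= Num.sqrt Q) -> LHS <= (1 - kap m.+1 lam th a mu) * SX.
  move=> Q Q0 hcQ hZ hW'.
  rewrite /kap -/c; apply: (@finish R SX LHS Q (Kc m.+1 lam) c) => //; first exact: Kc_gt0.
  have sq0 : 0 <= Num.sqrt Q by exact: sqrtr_ge0.
  have r0 : 0 <= m.+2%:R * Num.sqrt Q by rewrite mulr_ge0.
  have hW2 : forall k, (k < m)%N -> `|Z k.+1 - Z k| <= m.+2%:R * Num.sqrt Q.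
    move=> k hk; apply: le_trans (hW' k hk) _; rewrite ler_peMl // ler1n //.
  apply: le_trans (sumX_bound l0 r0 hZ hW2 hL0 hLk) _.
  rewrite /Kc exprMn sqr_sqrtr // !mulrA le_eqVlt; apply/orP; left; apply/eqP; ring.
have sqle : forall Q : R, 0 <= Q -> Num.sqrt Q <= m.+2%:R * Num.sqrt Q.
  by move=> Q Q0; rewrite ler_peMl ?sqrtr_ge0 // ler1n.
case: hcase => -[eA eB]; rewrite eA eB in hS.
- set Q := `|Z m.+1| ^+ 2 + E0 + SW.
  have Q0 : 0 <= Q by rewrite /Q !addr_ge0 // sqr_ge0.
  have hZn : `|Z m.+1| <= Num.sqrt Q.
    apply: norm_le_sqrt; move: E00 SW0; rewrite /Q /E0; lra.
  have hE : `|Z 0 - Z m.+1| <= Num.sqrt Q.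
    apply: norm_le_sqrt; have := sqr_ge0 `|Z m.+1|; move: SW0; rewrite /Q /E0; lra.
  have hWQ : forall k, (k < m)%N -> `|Z k.+1 - Z k| <= Num.sqrt Q.
    apply: hW; have := sqr_ge0 `|Z m.+1|; move: E00; rewrite /Q; lra.
  apply: (fin Q Q0).
  + rewrite idt.
    have h1 : c * `|Z m.+1| ^+ 2 <= 2 * th * g * mu * `|Z m.+1| ^+ 2 by apply: ler_wpM2r => //; exact: sqr_ge0.
    have h2 : c * E0 <= th * E0 by apply: ler_wpM2r => //; exact: le_trans hc2 hc3.
    have h3 : c * SW <= th * (1 - th) * SW by apply: ler_wpM2r.
    have h4 : th * (g * mu * `|Z m.+1| ^+ 2) <= th * S.
      apply: ler_wpM2l; first exact: ltW.
      by move: hS; rewrite mulr0 mul0r add0r.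
    rewrite /Q; lra.
  + have gen : forall k, (k <= m)%N -> `|Z k| <= k.+2%:R * Num.sqrt Q.
      elim=> [|k IH] hk.
        rewrite (vid2 (Z m.+1) (Z 0)); apply: le_trans (ler_normD _ _) _.
        rewrite -[_ - Z m.+1]opprB normrN.
        have -> : 2%:R * Num.sqrt Q = Num.sqrt Q + Num.sqrt Q :> R by rewrite mulr2n mulrDl mul1r.
        by rewrite lerD // -normrN opprB.
      rewrite (vid2 (Z k) (Z k.+1)); apply: le_trans (ler_normD _ _) _.
      have := IH (ltnW hk); have := hWQ k hk.
      have -> : (k.+1).+2%:R * Num.sqrt Q = k.+2%:R * Num.sqrt Q + Num.sqrt Q :> R.
        by rewrite -[(k.+1).+2]addn1 natrD mulrDl mul1r.
      move: (k.+2%:R * Num.sqrt Q) => t; lra.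
    move=> k hk; apply: le_trans (gen k hk) _.
    by apply: ler_wpM2r; [exact: sqrtr_ge0 | rewrite ler_nat].
  + move=> k hk; exact: hWQ.
- set SZ := `|Z 0| ^+ 2 + SZ'.
  set Q := SZ + SW.
  have SZ0 : 0 <= SZ by rewrite /SZ addr_ge0 // sqr_ge0.
  have Q0 : 0 <= Q by rewrite /Q addr_ge0.
  apply: (fin Q Q0).
  + rewrite idt.
    have h1 : c * SZ <= 2 * th * g * mu * SZ by apply: ler_wpM2r.
    have h3 : c * SW <= th * (1 - th) * SW by apply: ler_wpM2r.
    have h4 : th * (g * mu * SZ) <= th * S.
      apply: ler_wpM2l; first exact: ltW.
      by move: hS; rewrite mulr0 mul0r addr0.
    have h5 : 0 <= th * E0 by rewrite mulr_ge0 // ltW.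
    rewrite /Q; lra.
  + move=> k hk; apply: le_trans (sqle Q Q0); apply: norm_le_sqrt.
    apply: le_trans (_ : SZ <= Q); last by rewrite /Q lerDl.
    case: k hk => [|j] hj; first by rewrite /SZ lerDl.
    apply: le_trans (_ : SZ' <= SZ); last by rewrite /SZ lerDr sqr_ge0.
    rewrite /SZ'; apply: (@le_sum_term R (fun i => `|Z i.+1| ^+ 2) m j).
      by move=> ?; exact: sqr_ge0.
    exact: hj.
  + by apply: hW; rewrite /Q lerDr.
Qed.
End Core2.

Set Implicit Arguments. Unset Strict Implicit. Unset Printing Implicit Defensive.

Lemma pairD (W : zmodType) (a b a' b' : W) : (a + b) - (a' + b') = (a - a') + (b - b').
Proof. by rewrite opprD addrACA. Qed.
Lemma pairB (W : zmodType) (a b a' b' : W) : (a - b) - (a' - b') = (a - a') - (b - b').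
Proof. by rewrite pairD opprK opprB [- b + b']addrC. Qed.
Lemma idC (W : zmodType) (zk zk' x1 y1 x0 y0 zk1 zk1' : W) :
  (zk - zk') + (x1 - y1) - (x0 - y0) - (zk1 - zk1') =
  (zk + x1 - x0 - zk1) - (zk' + y1 - y0 - zk1').
Proof. by rewrite (pairB (zk + x1 - x0) zk1) (pairB (zk + x1) x0) (pairD zk). Qed.

Section VD.
Context {R : realType} {V : completeNormedModType R}.
Lemma vdiff (w1 w2 z1 z2 a1 a2 : V) (g : R) : w1 = z1 + g *: a1 -> w2 = z2 + g *: a2 ->
  (w1 - z1) - (w2 - z2) = g *: (a1 - a2).
Proof. by move=> -> ->; rewrite !(addrC z1) !(addrC z2) !addrK scalerBr. Qed.
Lemma vidA (x y a b a' b' : V) (t : R) :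
  (x + t *: (a - b)) - (y + t *: (a' - b')) = (x - y) + t *: ((a - a') - (b - b')).
Proof. by rewrite pairD -scalerBr pairB. Qed.
End VD.

Section MT.
Context {R : realType} {V : completeNormedModType R} (ip : inner_product V).
Variables (m : nat) (A : 'I_m.+1 -> V -> V) (B : V -> set V) (g th : R).
Hypothesis hAmax : forall j, maximally_monotone ip (graph_of (A j)).
Hypothesis hBmax : maximally_monotone ip B.
Hypothesis g0 : 0 < g.

Definition Jf : nat -> V -> V := fun k =>
  match @insub nat (fun k => k < m.+1)%N _ k with
  | Some j => resolvent g (graph_of (A j)) | None => id end.

Definition zf (x : 'I_m.+1 -> V) (i : nat) : V :=
  if (i < m.+1)%N then mt_z Jf (nat_get x) i
  else resolvent g B (mt_z Jf (nat_get x) 0 + mt_z Jf (nat_get x) m - nat_get x m).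

Lemma MT_eq x i : MT_op g th A B x i = x i + th *: (zf x i.+1 - zf x i).
Proof. by []. Qed.

Lemma nat_get_ord (x : 'I_m.+1 -> V) (i : 'I_m.+1) : nat_get x i = x i.
Proof.
rewrite /nat_get (insubT (fun k => k < m.+1)%N (ltn_ord i)) /=.
by congr x; apply: val_inj.
Qed.

Lemma Jf_ord k (hk : (k < m.+1)%N) : Jf k = resolvent g (graph_of (A (Ordinal hk))).
Proof.
rewrite /Jf (insubT (fun k => k < m.+1)%N hk) /=.
by do 3 congr (_ _); apply: val_inj.
Qed.

Definition argA (x : 'I_m.+1 -> V) k :=
  if k is k'.+1 then zf x k' + nat_get x k'.+1 - nat_get x k' else nat_get x 0.

Lemma zf_resA x k (hk : (k < m.+1)%N) :
  argA x k = zf x k + g *: A (Ordinal hk) (zf x k).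
Proof.
have -> : zf x k = resolvent g (graph_of (A (Ordinal hk))) (argA x k).
  rewrite /zf hk -Jf_ord; case: k hk => [|k] hk //=.
  by rewrite /zf (ltnW hk).
have [u [hu e]] := resolventP (argA x k) (hAmax (Ordinal hk)) g0.
move: hu; rewrite /graph_of /= => hu; rewrite -hu; exact: e.
Qed.

Lemma zf_resB x : exists u, B (zf x m.+1) u /\
  zf x 0 + zf x m - nat_get x m = zf x m.+1 + g *: u.
Proof.
have e : zf x m.+1 = resolvent g B (zf x 0 + zf x m - nat_get x m).
  by rewrite /zf ltnn /= ltnS leqnn.
rewrite e; exact: (resolventP _ hBmax g0).
Qed.
End MT.

Section MT2.
Context {R : realType} {V : completeNormedModType R} (ip : inner_product V).
Variables (m : nat) (A : 'I_m.+1 -> V -> V) (B : V -> set V) (g th a b L mu muA muB : R).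
Hypothesis hAmax : forall j, maximally_monotone ip (graph_of (A j)).
Hypothesis hBmax : maximally_monotone ip B.
Hypothesis th01 : 0 < th < 1.
Hypothesis a0 : 0 < a.
Hypothesis agb : a <= g <= b.
Hypothesis mu0 : 0 < mu.
Hypothesis hcase : (muA = 0 /\ muB = mu) \/ (muA = mu /\ muB = 0).
Hypothesis smA : forall j, strongly_monotone ip muA (graph_of (A j)).
Hypothesis lipA : forall j, lipschitz_op L (A j).
Hypothesis smB : strongly_monotone ip muB B.

Let g0 : 0 < g. Proof. by case/andP: agb => h _; exact: lt_le_trans a0 h. Qed.

Lemma lipb j zx zy : `|g *: (A j zx - A j zy)| <= b * `|L| * `|zx - zy|.
Proof.
rewrite normrZ gtr0_norm ?g0 //.
have h1 := lipA j zx zy.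
have h2 : L * `|zx - zy| <= `|L| * `|zx - zy| by apply: ler_wpM2r => //; exact: ler_norm.
have gb : g <= b by case/andP: agb.
have h3 : g * (`|L| * `|zx - zy|) <= b * (`|L| * `|zx - zy|).
  by apply: ler_wpM2r => //; rewrite mulr_ge0.
rewrite -mulrA; apply: le_trans h3; apply: ler_wpM2l; [exact: ltW g0|exact: le_trans h1 h2].
Qed.

Lemma smb j zx zy : g * muA * `|zx - zy| ^+ 2 <= ip (zx - zy) (g *: (A j zx - A j zy)).
Proof.
rewrite ipZr -mulrA; apply: ler_wpM2l; first exact: ltW g0.
exact: (@smA j zx zy (A j zx) (A j zy) erefl erefl).
Qed.

Lemma MT_contr (x y : 'I_m.+1 -> V) :
  \sum_(i < m.+1) `|MT_op g th A B x i - MT_op g th A B y i| ^+ 2 <=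
  (1 - kap m.+1 (b * `|L|) th a mu) * \sum_(i < m.+1) `|x i - y i| ^+ 2.
Proof.
set X := fun k => nat_get x k - nat_get y k.
set Z := fun k => zf A B g x k - zf A B g y k.
have eL : \sum_(i < m.+1) `|MT_op g th A B x i - MT_op g th A B y i| ^+ 2 =
          \sum_(i < m.+1) `|X i + th *: (Z i.+1 - Z i)| ^+ 2.
  by apply: eq_bigr => i _; rewrite !MT_eq vidA /X /Z !nat_get_ord.
have eR : \sum_(i < m.+1) `|x i - y i| ^+ 2 = \sum_(i < m.+1) `|X i| ^+ 2.
  by apply: eq_bigr => i _; rewrite /X !nat_get_ord.
rewrite eL eR.
have gmA := g0.
have ag : a <= g by case/andP: agb.
have l0 : 0 <= b * `|L|.
  by rewrite mulr_ge0 //; apply: le_trans (ltW a0) _; case/andP: agb => h1 h2; exact: le_trans h1 h2.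
have hres : forall k (hk : (k < m.+1)%N), argA A B g x k - zf A B g x k - (argA A B g y k - zf A B g y k)
   = g *: (A (Ordinal hk) (zf A B g x k) - A (Ordinal hk) (zf A B g y k)).
  move=> k hk; apply: vdiff; exact: zf_resA.
apply: (@core _ _ ip X Z m th a g mu (b * `|L|) muA muB th01 a0 ag mu0 l0 hcase).
- have := hres 0%N (ltn0Sn m); rewrite /= => e.
  rewrite /X /Z; rewrite (pairB (nat_get x 0)) e.
  exact: smb.
- move=> k hk; have := hres k.+1 hk; rewrite /= => e.
  rewrite /X /Z idC e; exact: smb.
- have [ux [hux ex]] := zf_resB A hBmax g0 x.
  have [uy [huy ey]] := zf_resB A hBmax g0 y.
  rewrite /X /Z idC (vdiff ex ey) ipZr -mulrA; apply: ler_wpM2l; first exact: ltW g0.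
  exact: smB.
- have := hres 0%N (ltn0Sn m); rewrite /= => e.
  rewrite /X /Z (pairB (nat_get x 0)) e; exact: lipb.
- move=> k hk; have := hres k.+1 hk; rewrite /= => e.
  rewrite /X /Z idC e; exact: lipb.
Qed.
End MT2.

Unset Implicit Arguments. Set Strict Implicit. Set Printing Implicit Defensive.

Theorem lemma5p2 (R : realType) (V : completeNormedModType R)
  (ip : inner_product V) (N : nat) (hN : (2 <= N)%N) (theta : R)
  (htheta : 0 < theta < 1) (a b : R) (ha : 0 < a) (hab : a <= b)
  (A : 'I_N.-1 -> V -> V) (B : V -> set V) (L mu : R) (hmu : 0 < mu) :
  ((forall j, monotone_op ip (graph_of (A j)) /\ lipschitz_op L (A j)) /\
     maximally_strongly_monotone ip mu B)
  \/
  ((forall j, maximally_strongly_monotone ip mu (graph_of (A j)) /\ lipschitz_op L (A j)) /\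
     maximally_monotone ip B) ->
  exists beta : R, 0 <= beta < 1 /\
    forall gamma : R, a <= gamma <= b ->
      beta_contraction beta (MT_op gamma theta A B).
Proof.
case: N hN A => [|[|m]] // hN A hyp.
have [muA [muB [hcase [hAmax [hBmax [smA [lipA smB]]]]]]] :
  exists muA muB, ((muA = 0 /\ muB = mu) \/ (muA = mu /\ muB = 0)) /\
    (forall j, maximally_monotone ip (graph_of (A j))) /\ maximally_monotone ip B /\
    (forall j, strongly_monotone ip muA (graph_of (A j))) /\
    (forall j, lipschitz_op L (A j)) /\ strongly_monotone ip muB B.
  case: hyp => [[hA [hBmax hBsm]] | [hA hBmax]].
  - exists 0, mu; split; first by left.
    split; first by move=> j; exact: lip_max (hA j).1 (hA j).2.
    split => //; split.
      move=> j x y u v hx hy; rewrite mul0r; exact: (hA j).1 _ _ _ _ hx hy.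
    by split => // j; exact: (hA j).2.
  - exists mu, 0; split; first by right.
    split; first by move=> j; exact: (hA j).1.1.
    split => //; split; first by move=> j; exact: (hA j).1.2.
    split; first by move=> j; exact: (hA j).2.
    move=> x y u v hx hy; rewrite mul0r; exact: hBmax.1 _ _ _ _ hx hy.
set k := kap m.+1 (b * `|L|) theta a mu.
have l0 : 0 <= b * `|L| by rewrite mulr_ge0 // ltW // (lt_le_trans ha hab).
have k0 : 0 < k.
  rewrite /k /kap lt_min ltr01 /= divr_gt0 //; [exact: cc_gt0 | exact: Kc_gt0].
have k1 : k <= 1 by rewrite /k /kap ge_min lexx.
have k1' : 0 <= 1 - k by rewrite subr_ge0.
exists (Num.sqrt (1 - k)); split.
  rewrite sqrtr_ge0 /= -[X in _ < X]sqrtr1 ltr_sqrt ?ltr01 //; lra.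
move=> gamma hg x y; rewrite /prod_norm -sqrtrM // ler_sqrt; last first.
  by rewrite mulr_ge0 // sumr_ge0 // => *; exact: sqr_ge0.
exact: (MT_contr hAmax hBmax htheta ha hg hmu hcase smA lipA smB x y).
Qed.
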